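(* Every right Rees artinian, left cancellative monoid is a group or a 0-group.
   Context: A monoid $S$ is right Rees artinian if its right ideals satisfy the descending chain condition. $S$ is left cancellative if $ab=ac$ implies $b=c$. A 0-group is a group with an externally adjoined zero. *)

(* Defs.v *)
Record Monoid : Type := {
  carrier :> Type;
  mul : carrier -> carrier -> carrier;
  one : carrier;
  mulA : forall a b c, mul a (mul b c) = mul (mul a b) c;
  mul1l : forall a, mul one a = a;
  mul1r : forall a, mul a one = a
}.

Arguments mul {m} _ _.
Arguments one {m}.

Definition right_ideal (M : Monoid) (I : M -> Prop) : Prop :=
  (exists x, I x) /\ (forall x s : M, I x -> I (mul x s)).

Definition right_Rees_artinian (M : Monoid) : Prop :=
  forall I : nat -> (M -> Prop),
    (forall n, right_ideal M (I n)) ->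
    (forall n (x : M), I (Datatypes.S n) x -> I n x) ->
    exists N, forall n, N <= n -> forall x : M, I n x <-> I N x.

Definition left_cancellative (M : Monoid) : Prop :=
  forall a b c : M, mul a b = mul a c -> b = c.

Definition is_group (M : Monoid) : Prop :=
  forall x : M, exists y : M, mul x y = one /\ mul y x = one.

Definition is_zero_group (M : Monoid) : Prop :=
  exists z : M,
    (forall x : M, mul z x = z /\ mul x z = z) /\
    one <> z /\
    (forall x y : M, x <> z -> y <> z -> mul x y <> z) /\
    (forall x : M, x <> z -> exists y : M, y <> z /\ mul x y = one /\ mul y x = one).

(* Main.v *)
Require Import Defs.

Fixpoint pw (S : Monoid) (x : S) (n : nat) : S :=
  match n with O => one | Datatypes.S k => mul (pw S x k) x end.

Lemma right_inv (S : Monoid) :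
  right_Rees_artinian S -> left_cancellative S -> forall x : S, exists s : S, mul x s = one.
Proof.
  intros HA HC x.
  destruct (HA (fun n y => exists s, y = mul (pw S x n) s)) as [N HN].
  - intros n; split.
    + exists (pw S x n), one. rewrite mul1r. reflexivity.
    + intros y t [s ->]. exists (mul s t). rewrite mulA. reflexivity.
  - intros n y [s ->]. exists (mul x s). simpl. rewrite mulA. reflexivity.
  - destruct (proj2 (HN (Datatypes.S N) (le_S _ _ (le_n N)) (pw S x N))) as [s Hs].
    + exists one. rewrite mul1r. reflexivity.
    + exists s. apply (HC (pw S x N)). simpl in Hs. rewrite mulA, <- Hs, mul1r. reflexivity.
Qed.

Theorem mainTheorem18 (S : Monoid) :
  right_Rees_artinian S -> left_cancellative S -> is_group S \/ is_zero_group S.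
Proof.
  intros HA HC. left. intros x.
  destruct (right_inv S HA HC x) as [s Hs].
  destruct (right_inv S HA HC s) as [t Ht].
  exists s. split; [exact Hs|].
  assert (E : x = t).
  { rewrite <- (mul1r S x), <- Ht, mulA, Hs, mul1l. reflexivity. }
  subst t. exact Ht.
Qed.
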